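(* If $T$ is a tree, then $\gamma_{\rm i}(T)=\alpha(T)$.
   Context: $\alpha(T)$ is the independence number. Indicated domination game on a graph $G$: two players, Dominator and Staller, alternate. In each round Dominator indicates a vertex $v$ not yet dominated by the vertices previously selected by Staller (a vertex dominates itself and its neighbors), and Staller must select a vertex of the closed neighborhood $N[v]$, adding it to a set $D$. The game ends when $D$ is a dominating set of $G$. Dominator wants to minimize $|D|$ and Staller to maximize it; the size of $D$ under optimal play of both is the indicated domination number $\gamma_{\rm i}(G)$. *)

(* Defs.v *)
From mathcomp Require Import all_boot.
Set Implicit Arguments. Unset Strict Implicit. Unset Printing Implicit Defensive.

Section Graph.
Variables (T : finType) (e : rel T).

Definition cnbh (v : T) : {set T} := [set u | (u == v) || e v u].

Definition dominated (D : {set T}) (v : T) : bool := [exists u in D, u \in cnbh v].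

Definition dominating (D : {set T}) : bool := [forall v, dominated D v].

(* Indicated domination game: value of the game from position D (the set of
   vertices selected by Staller so far), with fuel n.  Dominator (min) indicates
   an undominated vertex v, Staller (max) selects u in N[v]; each selection
   counts 1.  The game ends when D is dominating.  The index set of the min is
   nonempty whenever D is not dominating, and every selected u is new (u \in D
   would dominate v), so fuel #|T|.+1 suffices and the default #|T| of the min
   never matters (the game lasts at most #|T| rounds). *)
Fixpoint igame (n : nat) (D : {set T}) : nat :=
  match n with
  | 0 => 0
  | n'.+1 =>
      if dominating D then 0
      else \big[minn/#|T|]_(v | ~~ dominated D v)
             \max_(u in cnbh v) (igame n' (u |: D)).+1
  end.

Definition indicated_domination_number : nat := igame #|T|.+1 set0.

Definition independent (S : {set T}) : bool :=
  [forall x in S, forall y in S, ~~ e x y].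

Definition independence_number : nat :=
  \max_(S : {set T} | independent S) #|S|.

Definition simple_graph : Prop := symmetric e /\ irreflexive e.

Definition connected_graph : Prop := forall x y : T, connect e x y.

Definition acyclic_graph : Prop :=
  forall s : seq T, uniq s -> 2 < size s -> ~~ cycle e s.

Definition is_tree : Prop := simple_graph /\ connected_graph /\ acyclic_graph.

End Graph.

(* Main.v *)
Require Import Defs.
From mathcomp Require Import all_boot zify.
Set Implicit Arguments. Unset Strict Implicit. Unset Printing Implicit Defensive.

Section Tree.
Variables (T : finType) (e : rel T).
Hypotheses (esym : symmetric e) (eirr : irreflexive e) (eacyc : acyclic_graph e).

Definition eW (W : {set T}) : rel T := fun a b => [&& a \in W, b \in W & e a b].

Lemma eW_sub (W : {set T}) : subrel (eW W) e.
Proof. by move=> a b /and3P[]. Qed.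

Lemma path_eW_in (W : {set T}) x p : x \in W -> path (eW W) x p -> {subset x :: p <= W}.
Proof.
elim: p x => [|y p IH] x xW /=.
  by move=> _ z; rewrite inE => /eqP ->.
case/andP=> /and3P[_ yW _] pp z; rewrite inE => /orP[/eqP -> //|].
exact: IH.
Qed.

Lemma shortest (r : rel T) x p : path r x p ->
  exists p', [/\ path r x p', uniq (x :: p') & last x p' = last x p].
Proof. by case/shortenP=> p' pp up _; exists p'. Qed.

Lemma tree_lemma (A B : {set T}) x y b1 b2 :
  x != y -> x \in A -> connect (eW A) x y -> e x b1 -> e y b2 ->
  b2 \in B -> (forall z, z \in B -> z \notin A) -> connect (eW B) b2 b1 -> False.
Proof.
move=> nxy xA /connectP[p pp ey] exb1 eyb2 b2B dAB /connectP[q qp eb1].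
move: nxy exb1 eyb2; rewrite eb1 ey.
have [p' [pp' up' ep]] := shortest pp.
rewrite -ep.
have [q' [qp' uq' eq]] := shortest qp. rewrite -eq.
move=> nxy exb eyb.
have pA := path_eW_in xA pp'.
have qB := path_eW_in b2B qp'.
have pe : path e x p' := sub_path (@eW_sub A) pp'.
have qe : path e b2 q' := sub_path (@eW_sub B) qp'.
have p'n : p' != [::] by apply: contraNneq nxy => ->.
move: (eacyc (s := (x :: p') ++ (b2 :: q'))).
have -> : uniq ((x :: p') ++ (b2 :: q')).
  rewrite cat_uniq up' uq' andbT andTb.
  apply/hasPn => z zq; apply/negP => zp.
  by move: (dAB z (qB z zq)); rewrite (pA z zp).
have -> : 2 < size ((x :: p') ++ (b2 :: q')).
  have : 0 < size p' by case: (p') p'n.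
  by rewrite size_cat /=; lia.
move/(_ isT isT)/negP; apply.
rewrite cat_cons /= rcons_cat /= cat_path pe /= rcons_path eyb qe /=.
by rewrite esym.
Qed.


Definition Wof (D : {set T}) : {set T} := [set v | ~~ dominated e D v].
Definition alphaW (W : {set T}) : nat :=
  \max_(S : {set T} | independent e S && (S \subset W)) #|S|.
Definition att (W : {set T}) x := [exists t, (t \notin W) && e x t].
Definition K1 (W : {set T}) := forall x y, x \in W -> y \in W ->
  connect (eW W) x y -> att W x -> att W y -> x = y.

Lemma cnbhC u v : (u \in cnbh e v) = (v \in cnbh e u).
Proof. by rewrite !inE eq_sym esym. Qed.

Lemma cnbh_self u : u \in cnbh e u.
Proof. by rewrite inE eqxx. Qed.

Lemma dominatedU D u v : dominated e (u |: D) v = (u \in cnbh e v) || dominated e D v.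
Proof.
apply/existsP/orP => [[w /andP[]]|].
  rewrite in_setU1 => /orP[/eqP -> uv|wD wv]; first by left.
  by right; apply/existsP; exists w; rewrite wD.
case=> [uv|/existsP[w /andP[wD wv]]].
  by exists u; rewrite setU11.
by exists w; rewrite in_setU1 wD orbT.
Qed.

Lemma WofU D u : Wof (u |: D) = Wof D :\: cnbh e u.
Proof. by apply/setP => v; rewrite in_setD !inE dominatedU negb_or cnbhC inE. Qed.

Lemma eW_symm (W : {set T}) : symmetric (eW W).
Proof. by move=> a b; rewrite /eW esym andbCA. Qed.

Lemma connW_sym (W : {set T}) x y : connect (eW W) x y -> connect (eW W) y x.
Proof. by rewrite (sym_connect_sym (@eW_symm W)). Qed.

Lemma connW_sub (W W' : {set T}) x y : W' \subset W ->
  connect (eW W') x y -> connect (eW W) x y.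
Proof.
move=> sWW'; apply: connect_sub => a b /and3P[aW bW eab].
by apply: connect1; rewrite /eW (subsetP sWW' _ aW) (subsetP sWW' _ bW).
Qed.

Lemma connW1 (W : {set T}) x y : x \in W -> y \in W -> e x y -> connect (eW W) x y.
Proof. by move=> xW yW exy; apply: connect1; rewrite /eW xW yW. Qed.

Lemma alpha_witness (W : {set T}) : exists2 S, independent e S && (S \subset W) & #|S| = alphaW W.
Proof.
have hA : 0 < #|[pred S : {set T} | independent e S && (S \subset W)]|.
  apply/card_gt0P; exists set0; rewrite inE sub0set andbT.
  by apply/forallP => x; apply/implyP; rewrite inE.
have [S SA eS] := eq_bigmax_cond (fun S : {set T} => #|S|) hA.
by exists S => //; rewrite /alphaW eS.
Qed.

Lemma indepU S c : independent e S -> ~~ e c c -> (forall y, y \in S -> ~~ e c y) ->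
  independent e (c |: S).
Proof.
move=> /forallP iS ecc hc; apply/forallP => x; apply/implyP; rewrite in_setU1 => /orP[/eqP->|xS];
  apply/forallP => y; apply/implyP; rewrite in_setU1 => /orP[/eqP->|yS] //.
- exact: hc.
- by rewrite esym; apply: hc.
- by move: (iS x); rewrite xS => /forallP/(_ y); rewrite yS.
Qed.

Lemma alpha_drop (W W' : {set T}) c : W' \subset W -> c \in W -> c \notin W' ->
  (forall y, y \in W' -> ~~ e c y) -> alphaW W' < alphaW W.
Proof.
move=> sW cW cW' hc.
have [S /andP[iS sS] <-] := alpha_witness W'.
have cS : c \notin S by apply: contra cW' => /(subsetP sS).
apply: (@leq_trans #|c |: S|); first by rewrite cardsU1 cS.
apply: (@leq_bigmax_cond _ (fun S : {set T} => independent e S && (S \subset W))).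
rewrite indepU //.
- by rewrite subUset sub1set cW (subset_trans sS sW).
- by rewrite eirr.
- by move=> y yS; apply: hc; apply: (subsetP sS).
Qed.


Lemma attD (W : {set T}) u z : att (W :\: cnbh e u) z ->
  att W z \/ exists2 r, (r \in W) && (r \in cnbh e u) & e z r.
Proof.
case/existsP => t /andP[tW' ezt].
case tW: (t \in W).
  by right; exists t => //; move: tW'; rewrite in_setD tW andbT negbK.
by left; apply/existsP; exists t; rewrite tW ezt.
Qed.

Lemma att_split (W : {set T}) u x y :
  att (W :\: cnbh e u) x -> att (W :\: cnbh e u) y ->
  (att W x && att W y) \/ exists2 r, (r \in W) && (r \in cnbh e u) & (e x r || e y r).
Proof.
move=> ax ay.
case: (attD ax) => [axW|[r rr exr]]; last by right; exists r; rewrite ?exr.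
case: (attD ay) => [ayW|[r rr eyr]]; last by right; exists r; rewrite ?eyr ?orbT.
by left; rewrite axW ayW.
Qed.

Lemma conn_star u b1 b2 : b1 \in cnbh e u -> b2 \in cnbh e u ->
  connect (eW (cnbh e u)) b1 b2.
Proof.
have h : forall b, b \in cnbh e u -> connect (eW (cnbh e u)) b u.
  move=> b bu; case: (eqVneq b u) => [->|nbu]; first exact: connect0.
  apply: connW1 => //; first exact: cnbh_self.
  by move: bu; rewrite inE (negbTE nbu) esym.
move=> b1u b2u; apply: connect_trans (h _ b1u) _.
exact: connW_sym (h _ b2u).
Qed.

Lemma K1_white (W : {set T}) u : K1 W -> u \in W ->
  (forall z, z \in W -> connect (eW W) u z -> att W z -> z \notin cnbh e u ->
     exists2 b, b \in cnbh e u & e z b) ->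
  K1 (W :\: cnbh e u).
Proof.
move=> K uW H x y xW' yW' cxy ax ay.
have sW : W :\: cnbh e u \subset W := subsetDl _ _.
have xW := subsetP sW _ xW'; have yW := subsetP sW _ yW'.
have cxyW := connW_sub sW cxy.
case: (eqVneq x y) => // nxy; exfalso.
have [/andP[axW ayW]|[r /andP[rW ru] exyr]] := att_split ax ay.
  by move: nxy; rewrite (K x y xW yW cxyW axW ayW) eqxx.
have cur : connect (eW W) u r.
  case: (eqVneq r u) => [->|nru]; first exact: connect0.
  by apply: connW1 => //; move: ru; rewrite inE (negbTE nru).
have [cux cuy] : connect (eW W) u x /\ connect (eW W) u y.
  case/orP: exyr => [exr|eyr].
    have cux : connect (eW W) u x.
      by apply: connect_trans cur (connW1 rW xW _); rewrite esym.
    by split => //; apply: connect_trans cux cxyW.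
  have cuy : connect (eW W) u y.
    by apply: connect_trans cur (connW1 rW yW _); rewrite esym.
  by split => //; apply: connect_trans cuy (connW_sym cxyW).
have hb : forall z, z \in W :\: cnbh e u -> connect (eW W) u z ->
    att (W :\: cnbh e u) z -> exists2 b, b \in cnbh e u & e z b.
  move=> z zW' cuz az; case: (attD az) => [azW|[b /andP[_ bu] ezb]]; last by exists b.
  apply: H => //; first exact: (subsetP sW).
  by move: zW'; rewrite in_setD => /andP[].
have [bx bxu exb] := hb x xW' cux ax.
have [b' byu eyb] := hb y yW' cuy ay.
apply: (@tree_lemma (W :\: cnbh e u) (cnbh e u) x y bx b' nxy xW' cxy exb eyb byu _
  (conn_star byu bxu)).
by move=> z zu; rewrite in_setD zu.
Qed.

Lemma alpha_drop_white (W : {set T}) u : u \in W -> alphaW (W :\: cnbh e u) < alphaW W.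
Proof.
move=> uW; apply: alpha_drop (subsetDl _ _) uW _ _.
  by rewrite in_setD cnbh_self.
by move=> y; rewrite in_setD inE negb_or => /andP[/andP[_ ?] _].
Qed.

Lemma choice_move (W : {set T}) w0 : w0 \in W -> K1 W ->
  exists2 v, v \in W & forall u, u \in cnbh e v ->
    K1 (W :\: cnbh e u) /\ alphaW (W :\: cnbh e u) < alphaW W.
Proof.
move=> w0W K.
case: (pickP [pred c | [&& c \in W, connect (eW W) w0 c & att W c]]) =>
  [c /and3P[cW cc ca] | none].
- case: (pickP [pred a | (a \in W) && e c a]) => [a /andP[aW eca] | noa].
  + exists a => // u ua.
    have eac : e a c by rewrite esym.
    have uW : u \in W.
      move: ua; rewrite inE => /orP[/eqP-> //|eau].
      apply: contraT => uW.
      have aatt : att W a by apply/existsP; exists u; rewrite uW eau.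
      have := K a c aW cW (connW1 aW cW eac) aatt ca.
      by move=> ac; move: eca; rewrite ac eirr.
    have cua : connect (eW W) u a.
      move: ua; rewrite inE => /orP[/eqP-> |eau]; first exact: connect0.
      by apply: connW1 => //; rewrite esym.
    split; last exact: alpha_drop_white.
    apply: K1_white => // z zW cuz az zu.
    exists a; first by rewrite cnbhC.
    have czc : connect (eW W) z c.
      apply: connect_trans (connW_sym cuz) _.
      exact: connect_trans cua (connW1 aW cW eac).
    by rewrite (K z c zW cW czc az ca).
  + exists c => // u uc.
    have nw : forall t, t \in W -> ~~ e c t.
      by move=> t tW; apply/negP => ect; move: (noa t); rewrite /= tW ect.
    split; last first.
      apply: alpha_drop (subsetDl _ _) cW _ _.
        by rewrite in_setD cnbhC uc.
      by move=> y; rewrite in_setD => /andP[_ yW]; exact: nw.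
    move=> x y xW' yW' cxy ax ay.
    have sW : W :\: cnbh e u \subset W := subsetDl _ _.
    have xW := subsetP sW _ xW'; have yW := subsetP sW _ yW'.
    have cxyW := connW_sub sW cxy.
    case: (eqVneq x y) => // nxy; exfalso.
    have [/andP[axW ayW]|[r /andP[rW ru] exyr]] := att_split ax ay.
      by move: nxy; rewrite (K x y xW yW cxyW axW ayW) eqxx.
    case: (eqVneq u c) => [euc | nuc].
      have rc : r = c.
        move: ru; rewrite euc inE => /orP[/eqP//|ecr].
        by move: (nw r rW); rewrite ecr.
      case/orP: exyr; rewrite rc => ezc.
        by move: (nw x xW); rewrite esym ezc.
      by move: (nw y yW); rewrite esym ezc.
    have ecu : e c u by move: uc; rewrite inE (negbTE nuc).
    have uW : u \notin W by apply/negP => uW; move: (nw u uW); rewrite ecu.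
    have eur : e u r.
      move: ru; rewrite inE => /orP[/eqP ru|//].
      by move: uW; rewrite -ru rW.
    have ar : att W r by apply/existsP; exists u; rewrite uW esym eur.
    have rW' : r \notin W :\: cnbh e u by rewrite in_setD ru.
    have key : forall z, z \in W :\: cnbh e u -> connect (eW W) z r ->
        att (W :\: cnbh e u) z -> e z r.
      move=> z zW' czr az.
      have zW := subsetP sW _ zW'.
      case: (attD az) => [azW|[t /andP[tW tu] ezt]].
        by move: zW'; rewrite (K z r zW rW czr azW ar) (negbTE rW').
      have eut : e u t.
        move: tu; rewrite inE => /orP[/eqP tu|//].
        by move: uW; rewrite -tu tW.
      have at' : att W t by apply/existsP; exists u; rewrite uW esym eut.
      have ctr : connect (eW W) t r.
        by apply: connect_trans (connW1 tW zW _) czr; rewrite esym.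
      by rewrite -(K t r tW rW ctr at' ar).
    have [cxr cyr] : connect (eW W) x r /\ connect (eW W) y r.
      case/orP: exyr => [exr|eyr].
        have cxr := connW1 xW rW exr.
        by split => //; apply: connect_trans (connW_sym cxyW) cxr.
      have cyr := connW1 yW rW eyr.
      by split => //; apply: connect_trans cxyW cyr.
    apply: (@tree_lemma (W :\: cnbh e u) [set r] x y r r nxy xW' cxy
      (key x xW' cxr ax) (key y yW' cyr ay) (set11 r) _ (connect0 _ _)).
    by move=> z; rewrite inE => /eqP->.
- exists w0 => // u uw.
  have noatt : forall z, z \in W -> connect (eW W) w0 z -> ~~ att W z.
    by move=> z zW cz; apply/negP => az; move: (none z); rewrite /= zW cz az.
  have uW : u \in W.
    move: uw; rewrite inE => /orP[/eqP-> //|ewu].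
    apply: contraT => uW.
    have aw : att W w0 by apply/existsP; exists u; rewrite uW ewu.
    by move: (noatt w0 w0W (connect0 _ _)); rewrite aw.
  have cwu : connect (eW W) w0 u.
    move: uw; rewrite inE => /orP[/eqP-> |ewu]; first exact: connect0.
    exact: connW1.
  split; last exact: alpha_drop_white.
  apply: K1_white => // z zW cuz az zu; exfalso.
  by move: (noatt z zW (connect_trans cwu cuz)); rewrite az.
Qed.


Lemma bigmin_le_seq (r : seq T) (P : pred T) (F : T -> nat) d x0 : x0 \in r -> P x0 ->
  \big[minn/d]_(v <- r | P v) F v <= F x0.
Proof.
move=> + Px0; elim: r => // a r IH; rewrite inE big_cons => /orP[/eqP<-|xr].
  by rewrite Px0 geq_minl.
case: (P a); last exact: IH xr.
by apply: leq_trans; [exact: geq_minr | exact: IH xr].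
Qed.

Lemma bigmin_le (P : pred T) (F : T -> nat) d x0 : P x0 ->
  \big[minn/d]_(v | P v) F v <= F x0.
Proof. exact: bigmin_le_seq (mem_index_enum x0). Qed.

Lemma upper n D : K1 (Wof D) -> igame e n D <= alphaW (Wof D).
Proof.
elim: n D => [|n IH] D K //=.
case: ifP => dom //.
have [w0 w0W] : exists w0, w0 \in Wof D.
  move/negbT: dom; rewrite /dominating negb_forall => /existsP[w0 nw].
  by exists w0; rewrite inE.
have [v vW H] := choice_move w0W K.
have nv : ~~ dominated e D v by move: vW; rewrite inE.
apply: leq_trans; first exact: (bigmin_le _ _ nv).
apply/bigmax_leqP => u uv.
have [K' lt] := H u uv.
rewrite -WofU in K' lt.
exact: leq_ltn_trans (IH _ K') lt.
Qed.

Lemma lower S : independent e S -> dominating e S ->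
  forall n (D : {set T}), D \subset S -> #|S :\: D| < n -> #|S :\: D| <= igame e n D.
Proof.
move=> iS dS; elim=> [|n IH] D sD lt //=.
case: ifP => dom.
  suff -> : S :\: D = set0 by rewrite cards0.
  apply/setP => s; rewrite in_set0 in_setD; apply/negP => /andP[sD' sS].
  move/forallP: dom => /(_ s)/existsP[u /andP[uD us]].
  move: us; rewrite inE => /orP[/eqP us|esu].
    by move: sD'; rewrite -us uD.
  move/forallP: iS => /(_ s); rewrite sS /= => /forallP/(_ u).
  by rewrite (subsetP sD _ uD) esu.
apply: (big_ind (fun m => #|S :\: D| <= m)).
- by rewrite max_card.
- by move=> a b ha hb; rewrite leq_min ha hb.
move=> v nv.
move/forallP: dS => /(_ v)/existsP[s /andP[sS sv]].
have sD' : s \notin D.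
  by apply: contra nv => sD'; apply/existsP; exists s; rewrite sD' sv.
apply: leq_trans; last exact: (@leq_bigmax_cond _ (fun u => u \in cnbh e v) (fun u => (igame e n (u |: D)).+1) s sv).
have sSD : s \in S :\: D by rewrite in_setD sD' sS.
have ecard : #|S :\: D| = (#|S :\: (s |: D)|).+1.
  by rewrite (cardsD1 s) sSD setDDl setUC.
rewrite ecard ltnS; apply: IH.
  by rewrite subUset sub1set sS sD.
by rewrite -ltnS -ecard.
Qed.

End Tree.

Theorem theorem5p2 (T : finType) (e : rel T) :
  is_tree e -> indicated_domination_number e = independence_number e.
Proof.
move=> [[esym eirr] [_ eacyc]].
have W0 : Wof e set0 = [set: T].
  apply/setP => v; rewrite !inE; apply/negP => /existsP[u /andP[]].
  by rewrite inE.
apply/eqP; rewrite eqn_leq; apply/andP; split.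
- have K : K1 e (Wof e set0).
    by rewrite W0 => x y _ _ _ /existsP[t]; rewrite inE.
  apply: leq_trans; first exact: (upper esym eirr eacyc _ K).
  rewrite W0 /alphaW; apply: eq_leq; apply: eq_bigl => S.
  by rewrite subsetT andbT.
- have hA : 0 < #|[pred S : {set T} | independent e S]|.
    apply/card_gt0P; exists set0; rewrite inE.
    by apply/forallP => x; apply/implyP; rewrite inE.
  have [S iS eS] := eq_bigmax_cond (fun S : {set T} => #|S|) hA.
  have eS' : independence_number e = #|S| by exact: eS.
  rewrite eS'.
  have dS : dominating e S.
    apply/forallP => v; apply: contraT => nv.
    have vS : v \notin S.
      by apply: contra nv => vS; apply/existsP; exists v; rewrite vS inE eqxx.
    have hv : forall y, y \in S -> ~~ e v y.
      move=> y yS; apply/negP => evy; move/negP: nv; apply.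
      by apply/existsP; exists y; rewrite yS inE evy orbT.
    have hle : #|v |: S| <= independence_number e.
      apply: (@leq_bigmax_cond _ (fun S : {set T} => independent e S) (fun S : {set T} => #|S|)).
      by rewrite indepU // eirr.
    by move: hle; rewrite eS' cardsU1 vS ltnn.
  have := @lower T e S iS dS #|T|.+1 set0 (sub0set _).
  rewrite setD0; apply; rewrite ltnS; exact: max_card.
Qed.
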